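(* Suppose $c_1\ge-1$, $c_2\ge-1$ and $c_3<\bar c_3(c_1,c_2)$. Then $(1-x^2)U'+2xU+\frac12U^2=P_c(x)$ has no solution in $C^1(-1,1)$.
   Context: $P_c(x):=c_1(1-x)+c_2(1+x)+c_3(1-x^2)$ for $c=(c_1,c_2,c_3)$. $\bar c_3(c_1,c_2):=-\frac12(\sqrt{1+c_1}+\sqrt{1+c_2})(\sqrt{1+c_1}+\sqrt{1+c_2}+2)$. *)

(* Defs.v *)
From Stdlib Require Import Reals.
From Coquelicot Require Import Coquelicot.
Open Scope R_scope.

Definition P_c (c1 c2 c3 x : R) : R :=
  c1 * (1 - x) + c2 * (1 + x) + c3 * (1 - x ^ 2).

Definition c3bar (c1 c2 : R) : R :=
  - / 2 * (sqrt (1 + c1) + sqrt (1 + c2)) * (sqrt (1 + c1) + sqrt (1 + c2) + 2).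

Definition C1_on_open_interval (U : R -> R) : Prop :=
  forall x, -1 < x < 1 -> ex_derive U x /\ continuous (Derive U) x.

(* Main.v *)
Require Import Defs.
From Stdlib Require Import Reals Lra.
From Coquelicot Require Import Coquelicot.
Open Scope R_scope.

Lemma blowA (a b K : R) (G dG : R -> R) :
  a < b -> 0 < K ->
  (forall x, a < x < b -> is_derive G x (dG x)) ->
  (forall x, a < x < b -> K / (x - a) <= dG x) ->
  (forall x, a < x < b -> 0 < G x) -> False.
Proof.
  intros Hab HK Hd Hdg Hpos.
  set (b' := (a + b) / 2).
  set (Phi := fun x => G x - K / 2 * ln (x - a)).
  assert (Hinc : forall x, a < x < b' -> Phi x < Phi b').
  { intros x Hx.
    apply (incr_function Phi (Finite a) (Finite b) (fun x => dG x - K/2 * / (x - a))); simpl.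
    - intros y H1 H2. unfold Phi. apply (is_derive_minus G (fun y => K / 2 * ln (y - a))).
      apply Hd; lra.
      auto_derive. lra. field. lra.
    - intros y H1 H2. assert (K / (y - a) <= dG y) by (apply Hdg; lra).
      assert (0 < / (y - a)) by (apply Rinv_0_lt_compat; lra).
      unfold Rdiv in *. nra.
    - lra.
    - unfold b' in *; lra.
    - unfold b' in *; lra. }
  set (t := exp (- (2 * Rabs (Phi b') / K) - 1)).
  assert (Ht : 0 < t) by apply exp_pos.
  assert (Hb' : 0 < b' - a) by (unfold b'; lra).
  set (x := a + Rmin ((b' - a) / 2) t).
  assert (Hx1 : 0 < x - a) by (unfold x; replace (a + Rmin ((b' - a) / 2) t - a) with (Rmin ((b' - a) / 2) t) by ring; apply Rmin_pos; lra).
  assert (Hx2 : x - a <= t) by (unfold x; replace (a + Rmin ((b' - a) / 2) t - a) with (Rmin ((b' - a) / 2) t) by ring; apply Rmin_r).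
  assert (Hx3 : x - a <= (b' - a)/2) by (unfold x; replace (a + Rmin ((b' - a) / 2) t - a) with (Rmin ((b' - a) / 2) t) by ring; apply Rmin_l).
  assert (Hl : ln (x - a) <= - (2 * Rabs (Phi b') / K) - 1).
  { rewrite <- (ln_exp (- (2 * Rabs (Phi b') / K) - 1)). apply ln_le; auto. }
  assert (H1 := Hinc x ltac:(lra)).
  assert (H2 := Hpos x ltac:(unfold b' in *; lra)).
  unfold Phi in H1 at 1.
  assert (K / 2 * ln (x - a) <= - Rabs (Phi b') - K / 2).
  { replace (- Rabs (Phi b') - K / 2) with (K/2 * (- (2 * Rabs (Phi b') / K) - 1)) by (field; lra).
    apply Rmult_le_compat_l; lra. }
  pose proof (Rle_abs (Phi b')). lra.
Qed.

Lemma blowB (a b K : R) (G dG : R -> R) :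
  a < b -> 0 < K ->
  (forall x, a < x < b -> is_derive G x (dG x)) ->
  (forall x, a < x < b -> dG x <= - (K / (b - x))) ->
  (forall x, a < x < b -> 0 < G x) -> False.
Proof.
  intros Hab HK Hd Hdg Hpos.
  set (b' := (a + b) / 2).
  set (Phi := fun x => G x - K / 2 * ln (b - x)).
  assert (Hinc : forall x, b' < x < b -> Phi x < Phi b').
  { intros x Hx.
    cut (- Phi b' < - Phi x). lra.
    apply (incr_function (fun x => - Phi x) (Finite a) (Finite b) (fun x => - (dG x + K/2 * / (b - x)))); simpl.
    - intros y H1 H2.
      assert (HP : is_derive Phi y (dG y - (- (K/2 * /(b-y))))).
      { unfold Phi. apply (is_derive_minus G (fun y => K / 2 * ln (b - y))).
        apply Hd; lra.
        auto_derive. lra. field. lra. }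
      apply is_derive_opp in HP.
      replace (- (dG y + K/2*/(b-y))) with (opp (dG y - (- (K/2*/(b-y))))).
      exact HP.
      unfold opp; simpl. ring.
    - intros y H1 H2. assert (dG y <= - (K / (b - y))) by (apply Hdg; lra).
      assert (0 < / (b - y)) by (apply Rinv_0_lt_compat; lra).
      unfold Rdiv in *. nra.
    - unfold b' in *; lra.
    - unfold b' in *; lra.
    - unfold b' in *; lra. }
  set (t := exp (- (2 * Rabs (Phi b') / K) - 1)).
  assert (Ht : 0 < t) by apply exp_pos.
  assert (Hb' : 0 < b - b') by (unfold b'; lra).
  set (x := b - Rmin ((b - b') / 2) t).
  assert (Hx1 : 0 < b - x) by (unfold x; replace (b - (b - Rmin ((b - b') / 2) t)) with (Rmin ((b - b') / 2) t) by ring; apply Rmin_pos; lra).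
  assert (Hx2 : b - x <= t) by (unfold x; replace (b - (b - Rmin ((b - b') / 2) t)) with (Rmin ((b - b') / 2) t) by ring; apply Rmin_r).
  assert (Hx3 : b - x <= (b - b')/2) by (unfold x; replace (b - (b - Rmin ((b - b') / 2) t)) with (Rmin ((b - b') / 2) t) by ring; apply Rmin_l).
  assert (Hl : ln (b - x) <= - (2 * Rabs (Phi b') / K) - 1).
  { rewrite <- (ln_exp (- (2 * Rabs (Phi b') / K) - 1)). apply ln_le; auto. }
  assert (H1 := Hinc x ltac:(lra)).
  assert (H2 := Hpos x ltac:(unfold b' in *; lra)).
  unfold Phi in H1 at 1.
  assert (K / 2 * ln (b - x) <= - Rabs (Phi b') - K / 2).
  { replace (- Rabs (Phi b') - K / 2) with (K/2 * (- (2 * Rabs (Phi b') / K) - 1)) by (field; lra).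
    apply Rmult_le_compat_l; lra. }
  pose proof (Rle_abs (Phi b')). lra.
Qed.

Lemma exp_le' (a b : R) : a <= b -> exp a <= exp b.
Proof. intros [H|H]. left; apply exp_increasing; auto. subst; lra. Qed.

Theorem lemma2p6 (c1 c2 c3 : R) :
  -1 <= c1 -> -1 <= c2 -> c3 < c3bar c1 c2 ->
  ~ (exists U : R -> R,
       C1_on_open_interval U /\
       forall x, -1 < x < 1 ->
         (1 - x ^ 2) * Derive U x + 2 * x * U x + / 2 * (U x) ^ 2 = P_c c1 c2 c3 x).
Proof.
  intros H1 H2 H3 [U [HC HU]].
  unfold c3bar in H3.
  assert (Hs1 := sqrt_pos (1 + c1)).
  assert (Hs2 := sqrt_pos (1 + c2)).
  assert (Hq1 := sqrt_sqrt (1 + c1) ltac:(lra)).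
  assert (Hq2 := sqrt_sqrt (1 + c2) ltac:(lra)).
  remember (sqrt (1 + c1)) as s1. remember (sqrt (1 + c2)) as s2.
  set (delta := - / 2 * (s1 + s2) * (s1 + s2 + 2) - c3).
  assert (Hdel : 0 < delta) by (unfold delta; lra).
  set (mu := fun x => exp (s2 * ln (1 - x) + s1 * ln (1 + x))).
  set (D := fun x => U x - ((s1 - s2) - (2 + s1 + s2) * x)).
  set (E := fun x => mu x * D x).
  set (dE := fun x => - delta * mu x - mu x * (D x) ^ 2 / (2 * (1 - x ^ 2))).
  assert (HdE : forall x, -1 < x < 1 -> is_derive E x (dE x)).
  { intros x Hx. destruct (HC x Hx) as [Hex _].
    assert (HUx := HU x Hx).
    unfold E, mu, D. auto_derive.
    { repeat split; try lra; auto. }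
    change (Derive (fun x : R => U x) x) with (Derive U x).
    unfold dE, mu, D.
    replace (1 + - x) with (1 - x) by ring.
    set (m := exp (s2 * ln (1 - x) + s1 * ln (1 + x))).
    assert (HD : Derive U x = (P_c c1 c2 c3 x - 2 * x * U x - / 2 * (U x) ^ 2) / (1 - x ^ 2)).
    { assert (0 < 1 - x ^ 2) by nra. field_simplify_eq; [|lra]. lra. }
    rewrite HD. unfold delta, P_c.
    replace c1 with (s1 * s1 - 1) by lra.
    replace c2 with (s2 * s2 - 1) by lra.
    field. repeat split; nra. }

  assert (Hmu : forall x, 0 < mu x) by (intros; apply exp_pos).
  assert (HdEneg : forall x, -1 < x < 1 -> dE x < 0).
  { intros x Hx. unfold dE.
    assert (0 < 1 - x ^ 2) by nra.
    assert (0 <= mu x * D x ^ 2 / (2 * (1 - x ^ 2))).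
    { apply Rmult_le_pos. apply Rmult_le_pos. left; auto. apply pow2_ge_0.
      left; apply Rinv_0_lt_compat; lra. }
    specialize (Hmu x). nra. }
  assert (Hdec : forall x y, -1 < x -> x < y -> y < 1 -> E y < E x).
  { intros x y Hx Hxy Hy.
    cut (- E x < - E y). lra.
    apply (incr_function (fun x => - E x) (Finite (-1)) (Finite 1) (fun x => - dE x)); simpl; auto.
    - intros z Hz1 Hz2. assert (HP := HdE z ltac:(lra)).
      apply is_derive_opp in HP. exact HP.
    - intros z Hz1 Hz2. assert (HP := HdEneg z ltac:(lra)). lra. }
  set (M := exp ((s1 + s2) * ln 2)).
  assert (HM : 0 < M) by apply exp_pos.
  set (K := / (4 * M)).
  assert (HK : 0 < K) by (apply Rinv_0_lt_compat; lra).
  assert (HmuM : forall x, -1 < x < 1 -> mu x <= M).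
  { intros x Hx. apply exp_le'.
    assert (ln (1 - x) <= ln 2) by (apply ln_le; lra).
    assert (ln (1 + x) <= ln 2) by (apply ln_le; lra).
    nra. }
  assert (Hkey : forall x, -1 < x < 1 -> E x <> 0 ->
            dE x / (E x) ^ 2 <= - (K / (1 - x)) /\ dE x / (E x) ^ 2 <= - (K / (1 + x))).
  { intros x Hx HE0.
    assert (HD0 : D x <> 0).
    { intro HD0; apply HE0; unfold E; rewrite HD0; ring. }
    assert (Hq : 0 < 1 - x ^ 2) by nra.
    assert (Hm := Hmu x). assert (HmM := HmuM x Hx).
    assert (Heq : dE x / (E x) ^ 2 = - delta / (mu x * D x ^ 2) - / (2 * mu x * (1 - x ^ 2))).
    { unfold dE, E. field. repeat split; lra. }
    rewrite Heq.
    assert (0 < delta / (mu x * D x ^ 2)).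
    { apply Rdiv_lt_0_compat; auto. apply Rmult_lt_0_compat; auto.
      assert (0 < D x ^ 2). { apply pow2_gt_0. auto. } lra. }
    assert (K / (1 - x) <= / (2 * mu x * (1 - x ^ 2))).
    { unfold K, Rdiv. rewrite <- Rinv_mult.
      apply Rinv_le_contravar. apply Rmult_lt_0_compat; [|lra]. apply Rmult_lt_0_compat; lra.
      replace (2 * mu x * (1 - x ^ 2)) with (2 * (1 + x) * (mu x * (1 - x))) by ring.
      replace (4 * M * (1 - x)) with (4 * (M * (1 - x))) by ring.
      assert (mu x * (1 - x) <= M * (1 - x)) by (apply Rmult_le_compat_r; lra).
      assert (0 < mu x * (1 - x)) by (apply Rmult_lt_0_compat; lra).
      nra. }
    assert (K / (1 + x) <= / (2 * mu x * (1 - x ^ 2))).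
    { unfold K, Rdiv. rewrite <- Rinv_mult.
      apply Rinv_le_contravar. apply Rmult_lt_0_compat; [|lra]. apply Rmult_lt_0_compat; lra.
      replace (2 * mu x * (1 - x ^ 2)) with (2 * (1 - x) * (mu x * (1 + x))) by ring.
      replace (4 * M * (1 + x)) with (4 * (M * (1 + x))) by ring.
      assert (mu x * (1 + x) <= M * (1 + x)) by (apply Rmult_le_compat_r; lra).
      assert (0 < mu x * (1 + x)) by (apply Rmult_lt_0_compat; lra).
      nra. }
    split; lra. }
  assert (Hle : forall x0, -1 < x0 < 1 -> E x0 <= 0).
  { intros x0 Hx0. destruct (Rle_or_lt (E x0) 0) as [h|h]; auto. exfalso.
    assert (HEp : forall x, -1 < x < x0 -> E x0 < E x) by (intros; apply Hdec; lra).
    apply (blowA (-1) x0 K (fun x => / E x) (fun x => - dE x / (E x) ^ 2)); try lra.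
    - intros x Hx. apply is_derive_inv. apply HdE; lra. assert (HH := HEp x Hx). lra.
    - intros x Hx. assert (HH := HEp x Hx).
      destruct (Hkey x ltac:(lra) ltac:(lra)) as [_ Hk].
      replace (x - -1) with (1 + x) by ring.
      replace (- dE x / E x ^ 2) with (- (dE x / E x ^ 2)) by (field; lra). lra.
    - intros x Hx. assert (HH := HEp x Hx). apply Rinv_0_lt_compat; lra. }
  assert (Hge : forall x0, -1 < x0 < 1 -> 0 <= E x0).
  { intros x0 Hx0. destruct (Rle_or_lt 0 (E x0)) as [h|h]; auto. exfalso.
    assert (HEp : forall x, x0 < x < 1 -> E x < E x0) by (intros; apply Hdec; lra).
    apply (blowB x0 1 K (fun x => / (- E x)) (fun x => - (- dE x) / (- E x) ^ 2)); try lra.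
    - intros x Hx. apply (is_derive_inv (fun x => - E x)).
      assert (HP := HdE x ltac:(lra)). apply is_derive_opp in HP. exact HP.
      assert (HH := HEp x Hx). lra.
    - intros x Hx. assert (HH := HEp x Hx).
      destruct (Hkey x ltac:(lra) ltac:(lra)) as [Hk _].
      replace (- - dE x / (- E x) ^ 2) with (dE x / E x ^ 2) by (field; lra). lra.
    - intros x Hx. assert (HH := HEp x Hx). apply Rinv_0_lt_compat; lra. }
  assert (Hd := Hdec (-1/2) 0 ltac:(lra) ltac:(lra) ltac:(lra)).
  assert (Ha := Hle 0 ltac:(lra)). assert (Hb := Hge (-1/2) ltac:(lra)).
  assert (Hc := Hge 0 ltac:(lra)). assert (Hd' := Hle (-1/2) ltac:(lra)).
  lra.
Qed.
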